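(* Let $U\subset\mathbb{R}^m$ be open and connected and let $\phi=(\phi^1,\dots,\phi^n):U\to\mathbb{R}^n$ be a smooth horizontally weakly conformal map. Let $\Phi:U\times\mathbb{R}^m\to\mathbb{R}^n$, $\Phi^k(x,y)=\sum_{i=1}^m\frac{\partial\phi^k}{\partial x_i}(x)\,y_i$, be its complete lift. Then $\Phi$ is horizontally weakly conformal if and only if, at every $x\in U$, for all $\alpha,\beta\in\{1,\dots,n\}$, $$(\operatorname{hess}\phi^\alpha)^2=(\operatorname{hess}\phi^\beta)^2,$$ and for all $\alpha\neq\beta$, $$(\operatorname{hess}\phi^\alpha)(\operatorname{hess}\phi^\beta)=-(\operatorname{hess}\phi^\beta)(\operatorname{hess}\phi^\alpha),$$ where $\operatorname{hess}\phi^\alpha$ denotes the $m\times m$ Hessian matrix $\big(\frac{\partial^2\phi^\alpha}{\partial x_i\partial x_j}\big)$.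
   Context: A smooth map $\psi=(\psi^1,\dots,\psi^n)$ from an open subset of $\mathbb{R}^N$ to $\mathbb{R}^n$ is horizontally weakly conformal if there is a function $\lambda$ with $\sum_{i=1}^N\frac{\partial\psi^k}{\partial x_i}\frac{\partial\psi^l}{\partial x_i}=\lambda^2\delta_{kl}$ for all $k,l=1,\dots,n$ at every point. For $\Phi$ the coordinates are $(x_1,\dots,x_m,y_1,\dots,y_m)$. *)

(* Defs.v *)
From HB Require Import structures.
From mathcomp Require Import all_boot all_order all_algebra.
From mathcomp Require Import all_classical all_reals all_analysis.
Set Implicit Arguments. Unset Strict Implicit. Unset Printing Implicit Defensive.
Import Order.TTheory GRing.Theory Num.Theory.
Import numFieldNormedType.Exports.
Local Open Scope classical_set_scope.
Local Open Scope ring_scope.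

Definition ei {R : realType} {N : nat} (i : 'I_N) : 'rV[R]_N := delta_mx 0 i.

Definition partial {R : realType} {N : nat} (i : 'I_N) (f : 'rV[R]_N -> R)
  : 'rV[R]_N -> R := fun x => 'D_(ei i) f x.

Definition iter_partial {R : realType} {N : nat} (s : seq 'I_N)
  (f : 'rV[R]_N -> R) : 'rV[R]_N -> R := foldr (@partial R N) f s.

Definition smooth_on {R : realType} {N : nat} (U : set 'rV[R]_N)
  (f : 'rV[R]_N -> R) : Prop :=
  forall (s : seq 'I_N) (x : 'rV[R]_N), U x -> differentiable (iter_partial s f) x.

Definition hwc {R : realType} {N n : nat} (D : set 'rV[R]_N)
  (psi : 'I_n -> 'rV[R]_N -> R) : Prop :=
  exists lambda : 'rV[R]_N -> R, forall z, D z ->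
    forall k l : 'I_n,
      \sum_(i < N) partial i (psi k) z * partial i (psi l) z
      = lambda z ^+ 2 * (k == l)%:R.

Definition hess {R : realType} {m : nat} (f : 'rV[R]_m -> R) (x : 'rV[R]_m)
  : 'M[R]_m := \matrix_(i, j) partial i (partial j f) x.

(* complete lift: Phi^k(x,y) = sum_i d phi^k/dx_i (x) y_i, with (x,y) in
   R^m x R^m = R^(m+m) encoded as row_mx x y *)
Definition complete_lift {R : realType} {m n : nat}
  (phi : 'I_n -> 'rV[R]_m -> R) : 'I_n -> 'rV[R]_(m + m) -> R :=
  fun k z => \sum_(i < m) partial i (phi k) (lsubmx z) * rsubmx z 0 i.

Definition lift_domain {R : realType} {m : nat} (U : set 'rV[R]_m)
  : set 'rV[R]_(m + m) := [set z | U (lsubmx z)].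

(* Main.v *)
Require Import Defs.
From HB Require Import structures.
From mathcomp Require Import all_boot all_order all_algebra.
From mathcomp Require Import all_classical all_reals all_analysis.
From mathcomp Require Import lra.
Import Order.TTheory GRing.Theory Num.Theory.
Import numFieldNormedType.Exports.
Local Open Scope classical_set_scope.
Local Open Scope ring_scope.

Section S.
Variable R : realType.
Variable N : nat.
Implicit Types (f : 'rV[R]_N -> R) (u v c : 'rV[R]_N).

Lemma line_is_derive f v c (g : R -> R) (dg : R) :
  (forall h, f (h *: v + c) = g h) -> is_derive (0:R) (1:R) g dg -> is_derive c v f dg.
Proof.
move=> fg [gd gv].
have E : (fun h : R => h^-1 *: ((f \o shift c) (h *: v) - f c)) =
         (fun h : R => h^-1 *: ((g \o shift 0) (h *: 1) - g 0)).
  apply/funext => h /=; rewrite /shift /= addr0 [h *: 1]mulr1 fg.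
  by have := fg 0; rewrite scale0r add0r => ->.
by split; rewrite /derivable /derive E.
Qed.

Lemma line_derive f v c s0 : derivable f (s0 *: v + c) v ->
  is_derive s0 (1:R) (fun s => f (s *: v + c)) ('D_v f (s0 *: v + c)).
Proof.
move=> df.
have E : (fun h : R => h^-1 *: ((f \o shift (s0 *: v + c)) (h *: v) - f (s0 *: v + c))) =
         (fun h : R => h^-1 *: (((fun s => f (s *: v + c)) \o shift s0) (h *: 1) - f (s0 *: v + c))).
  apply/funext => h /=; rewrite /shift /= [h *: 1]mulr1 scalerDl addrA.
  done.
by split; rewrite /derivable /derive -E.
Qed.

Lemma mvt_line f v c h : 0 < h ->
  (forall t, 0 <= t <= h -> derivable f (t *: v + c) v) ->
  exists2 d, 0 < d < h & f (h *: v + c) - f c = 'D_v f (d *: v + c) * h.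
Proof.
move=> h0 hd.
have := @MVT R (fun s => f (s *: v + c)) (fun s => 'D_v f (s *: v + c)) 0 h h0.
case.
- move=> t; rewrite in_itv /= => /andP[t0 th]; apply: line_derive.
  by apply: hd; rewrite !ltW.
- apply: derivable_within_continuous => t; rewrite in_itv /= => /andP[t0 th].
  have [] := @line_derive _ _ _ t (hd t _) => //; by rewrite t0.
move=> d; rewrite in_itv /= => dh; rewrite scale0r add0r subr0 => E.
by exists d.
Qed.
Lemma shift_is_derive f a q w : derivable f (a + q) w ->
  is_derive q w (fun p => f (a + p)) ('D_w f (a + q)).
Proof.
move=> df.
have E : (fun h : R => h^-1 *: ((f \o shift (a + q)) (h *: w) - f (a + q))) =
         (fun h : R => h^-1 *: (((fun p => f (a + p)) \o shift q) (h *: w) - f (a + q))).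
  by apply/funext => h /=; rewrite /shift /= addrCA.
by split; rewrite /derivable /derive -E.
Qed.

Lemma delta_mvt f u v x h : 0 < h ->
 (forall a b, 0 <= a <= h -> 0 <= b <= h ->
   derivable f (a *: u + (b *: v + x)) u /\
   derivable ('D_u f) (a *: u + (b *: v + x)) v) ->
 exists s t, [/\ 0 < s < h, 0 < t < h &
   f (h *: v + (h *: u + x)) - f (h *: u + x) - (f (h *: v + x) - f x)
   = 'D_v ('D_u f) (t *: v + (s *: u + x)) * (h * h)].
Proof.
move=> h0 hyp.
have h0' : 0 <= h <= h by rewrite lexx ltW.
have z0 : 0 <= (0:R) <= h by rewrite lexx ltW.
pose G := fun q => f (h *: v + q) - f q.
have dG : forall t, 0 <= t <= h -> is_derive (t *: u + x) u G
    ('D_u f (h *: v + (t *: u + x)) - 'D_u f (t *: u + x)).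
  move=> t ht; apply: is_deriveB.
    apply: shift_is_derive; rewrite addrCA; exact: (hyp t h ht h0').1.
  apply: derivableP; have := (hyp t 0 ht z0).1; by rewrite scale0r add0r.
have [s sh Es] := @mvt_line G u x h h0 (fun t ht => @ex_derive _ _ _ _ _ _ _ (dG t ht)).
have sh' : 0 <= s <= h by case/andP: sh => *; rewrite !ltW.
rewrite (@derive_val _ _ _ _ _ _ _ (dG s sh')) in Es.
have [t th Et] := @mvt_line ('D_u f) v (s *: u + x) h h0 (fun t ht =>
   ltac:(rewrite addrCA; exact: (hyp s t sh' ht).2)).
exists s, t; split => //.
by rewrite /G in Es; rewrite Es Et mulrA.
Qed.
Lemma swap4 (a b c d : R) : a - b - (c - d) = a - c - (b - d).
Proof. lra. Qed.

Lemma fin (a b c d e : R) : c = d -> `|a - c| < e / 2 -> `|b - d| < e / 2 ->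
  `|a - b| < e.
Proof.
move=> -> h1 h2.
have -> : a - b = (a - d) - (b - d) by lra.
apply: le_lt_trans (ler_normB _ _) _; lra.
Qed.

Lemma schwarz f u v x (P : set 'rV[R]_N) :
  `|u| <= 1 -> `|v| <= 1 -> nbhs x P ->
  (forall q, P q -> [/\ derivable f q u, derivable f q v,
      derivable ('D_u f) q v & derivable ('D_v f) q u]) ->
  {for x, continuous ('D_v ('D_u f))} -> {for x, continuous ('D_u ('D_v f))} ->
  'D_v ('D_u f) x = 'D_u ('D_v f) x.
Proof.
move=> nu nv Px hP c1 c2.
set A := 'D_v ('D_u f) x; set B := 'D_u ('D_v f) x.
suff key : forall e : R, 0 < e -> `|A - B| < e.
  apply/eqP; rewrite -subr_eq0; apply/negPn/negP => ne.
  by have := key `|A - B|; rewrite normr_gt0 ltxx; move/(_ ne).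
move=> e e0.
have e2 : 0 < e / 2 by rewrite divr_gt0.
have N1 := @cvgr_dist_lt R R^o _ (nbhs x) (nbhs_filter x) ('D_v ('D_u f)) A c1 _ e2.
have N2 := @cvgr_dist_lt R R^o _ (nbhs x) (nbhs_filter x) ('D_u ('D_v f)) B c2 _ e2.
have NN := @filterI _ (nbhs x) (nbhs_filter x) _ _ Px (@filterI _ (nbhs x) (nbhs_filter x) _ _ N1 N2).
have [r r0 Hr] := iffLR (nbhs_ballP _ _) NN.
move: r0 => /= r0.
pose h := r / 4.
have h0 : 0 < h by rewrite divr_gt0.
have inb : forall a b, 0 <= a <= h -> 0 <= b <= h ->
    ball x r (a *: u + (b *: v + x)).
  move=> a b /andP[a0 ah] /andP[b0 bh].
  rewrite -ball_normE /= (addrA (a *: u)) (addrC _ x) opprD addrA subrr sub0r normrN.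
  rewrite (le_lt_trans (ler_normD _ _)) // !normrZ.
  rewrite (ger0_norm a0) (ger0_norm b0).
  have : a * `|u| <= h.
    by rewrite (le_trans _ ah) // ler_piMr.
  have : b * `|v| <= h.
    by rewrite (le_trans _ bh) // ler_piMr.
  rewrite /h; lra.
have inb' : forall a b, 0 <= a <= h -> 0 <= b <= h ->
    ball x r (a *: v + (b *: u + x)).
  by move=> a b ha hb; rewrite addrCA; apply: inb.
have [s [t [sh th E1]]] := @delta_mvt f u v x h h0 (fun a b ha hb =>
   let: And4 d1 _ d3 _ := hP _ (Hr _ (inb a b ha hb)).1 in conj d1 d3).
have [s' [t' [sh' th' E2]]] := @delta_mvt f v u x h h0 (fun a b ha hb =>
   let: And4 _ d2 _ d4 := hP _ (Hr _ (inb' a b ha hb)).1 in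
   conj d2 d4).
have hh : h * h != 0 by rewrite mulf_neq0 // gt_eqF.
have E : 'D_v ('D_u f) (t *: v + (s *: u + x)) = 'D_u ('D_v f) (t' *: u + (s' *: v + x)).
  apply: (mulIf hh); apply: etrans (esym E1) _; apply: etrans _ E2.
  rewrite [h *: u + (h *: v + x)]addrCA; exact: swap4.
have lt01 : forall a, 0 < a < h -> 0 <= a <= h by move=> a /andP[? ?]; rewrite !ltW.
have [_ [n1 _]] := Hr _ (inb' _ _ (lt01 _ th) (lt01 _ sh)).
have [_ [_ n2]] := Hr _ (inb _ _ (lt01 _ th') (lt01 _ sh')).
exact: fin E n1 n2.
Qed.
End S.

Lemma norm_ei (R : realType) N (i : 'I_N) : `|ei i : 'rV[R]_N| <= 1.
Proof.
rewrite /Num.norm /= mx_normrE; apply: bigmax_le => //= -[a b] _.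
rewrite !mxE; case: (_ && _); rewrite ?normr1 ?normr0 //.
Qed.


Lemma hess_sym (R : realType) N (U : set 'rV[R]_N) f x : open U -> smooth_on U f -> U x ->
  forall i j, partial i (partial j f) x = partial j (partial i f) x.
Proof.
move=> oU sf Ux i j.
have nU : nbhs x U by move: oU; rewrite openE => /(_ x Ux).
have S := (@schwarz R N f (ei j) (ei i) x U (norm_ei R N j) (norm_ei R N i) nU).
rewrite /partial; apply: S.
- move=> q Uq; split; apply: diff_derivable.
  + exact: (sf [::] q Uq).
  + exact: (sf [::] q Uq).
  + exact: (sf [:: j] q Uq).
  + exact: (sf [:: i] q Uq).
- exact: differentiable_continuous (sf [:: i; j] x Ux).
- exact: differentiable_continuous (sf [:: j; i] x Ux).
Qed.

Lemma affine_derive (R : realType) (A B : R) : is_derive (0:R) (1:R) (fun h : R => A + h * B) B.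
Proof.
have L : (fun h : R => h^-1 *: (((fun h : R => A + h * B) \o shift 0) (h *: 1) - (A + 0 * B))) @ (0:R)^' --> B.
  apply: cvg_near_cst.
  have := @nbhs_dnbhs_neq R 0; apply: filterS => h hn /=.
  rewrite /shift /= addr0 mul0r addr0 [h *: 1]mulr1 addrC addKr.
  by rewrite [_ *: _]mulrA mulVf // mul1r.
split; first by apply/cvg_ex; exists B.
exact: cvg_lim L.
Qed.

Section L.
Variables (R : realType) (m n : nat) (phi : 'I_n -> 'rV[R]_m -> R).

Lemma lsub_l (i : 'I_m) (h : R) (z : 'rV[R]_(m + m)) :
  lsubmx (h *: ei (lshift m i) + z) = h *: ei i + lsubmx z.
Proof. by apply/matrixP => a b; rewrite !mxE eq_lshift. Qed.

Lemma rsub_l (i : 'I_m) (h : R) (z : 'rV[R]_(m + m)) :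
  rsubmx (h *: ei (lshift m i) + z) = rsubmx z.
Proof. by apply/matrixP => a b; rewrite !mxE eq_rlshift andbF mulr0 add0r. Qed.

Lemma lsub_r (i : 'I_m) (h : R) (z : 'rV[R]_(m + m)) :
  lsubmx (h *: ei (rshift m i) + z) = lsubmx z.
Proof. by apply/matrixP => a b; rewrite !mxE eq_lrshift andbF mulr0 add0r. Qed.

Lemma rsub_r (i : 'I_m) (h : R) (z : 'rV[R]_(m + m)) :
  rsubmx (h *: ei (rshift m i) + z) = h *: ei i + rsubmx z.
Proof. by apply/matrixP => a b; rewrite !mxE eq_rshift. Qed.

Lemma lift_partial_r k (i : 'I_m) z :
  partial (rshift m i) (complete_lift phi k) z = partial i (phi k) (lsubmx z).
Proof.
set A := \sum_(j < m) partial j (phi k) (lsubmx z) * rsubmx z 0 j.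
set B := partial i (phi k) (lsubmx z).
suff : is_derive z (ei (rshift m i)) (complete_lift phi k) B by case.
apply: (@line_is_derive R (m + m) _ _ _ (fun h => A + h * B)); last exact: affine_derive.
move=> h; rewrite /complete_lift lsub_r rsub_r /A /B.
under eq_bigr do rewrite !mxE mulrDr.
rewrite big_split /= addrC; congr (_ + _).
  by apply: eq_bigr => j _; rewrite mxE.
rewrite (bigD1 i) //= eqxx mulr1 big1 ?addr0; first by rewrite mulrC.
by move=> j /negbTE ->; rewrite mulr0 mulr0.
Qed.

Lemma lift_partial_l k (i : 'I_m) z :
  (forall j, derivable (partial j (phi k)) (lsubmx z) (ei i)) ->
  partial (lshift m i) (complete_lift phi k) z =
  \sum_(j < m) partial i (partial j (phi k)) (lsubmx z) * rsubmx z 0 j.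
Proof.
move=> dP.
set F := fun (j : 'I_m) (h : R) => rsubmx z 0 j *: partial j (phi k) (h *: ei i + lsubmx z).
have dF : forall j, is_derive (0:R) (1:R) (F j)
    (rsubmx z 0 j *: partial i (partial j (phi k)) (lsubmx z)).
  move=> j; apply: is_deriveZ.
  have := @line_derive R m (partial j (phi k)) (ei i) (lsubmx z) 0.
  by rewrite scale0r add0r; apply.
have := is_derive_sum dF; rewrite fct_sumE => dS.
suff : is_derive z (ei (lshift m i)) (complete_lift phi k)
   (\sum_(j < m) rsubmx z 0 j *: partial i (partial j (phi k)) (lsubmx z)).
  by case => _ E; rewrite /partial E; apply: eq_bigr => j _; rewrite mulrC.
apply: (@line_is_derive R (m + m) _ _ _ _ _ _ dS).
move=> h; rewrite /complete_lift lsub_l rsub_l /F.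
by apply: eq_bigr => j _; rewrite mulrC.
Qed.

End L.

Section Alg.
Variables (R : realType) (m : nat).
Implicit Types (M A B : 'M[R]_m) (y : 'rV[R]_m).

Definition Q M y := (y *m M *m y^T) 0 0.

Lemma QD A B y : Q (A + B) y = Q A y + Q B y.
Proof. by rewrite /Q mulmxDr mulmxDl mxE. Qed.

Lemma QN A y : Q (- A) y = - Q A y.
Proof. by rewrite /Q mulmxN mulNmx mxE. Qed.

Lemma QT A y : Q A^T y = Q A y.
Proof.
rewrite /Q -[in RHS](trmxK (y *m A *m y^T)) [in RHS]mxE.
by rewrite !trmx_mul trmxK mulmxA.
Qed.

Lemma Q_ei A (i j : 'I_m) : Q A (ei i + ei j) = A i i + A i j + A j i + A j j.
Proof.
rewrite /Q /ei linearD /= !trmx_delta !mulmxDl !mulmxDr -!rowE -!colE !mxE.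
by rewrite !addrA.
Qed.

Lemma polar A : A^T = A -> (forall y, Q A y = 0) -> A = 0.
Proof.
move=> sA hA; apply/matrixP => i j; rewrite mxE.
have hii : forall k, A k k = 0.
  move=> k; have := hA (ei k + ei k); rewrite Q_ei; lra.
have := hA (ei i + ei j); rewrite Q_ei !hii.
have -> : A j i = A i j by rewrite -{1}sA mxE.
lra.
Qed.

Lemma Q_expand (Hk Hl : 'M[R]_m) y :
  \sum_(i < m) (\sum_(j < m) Hk i j * y 0 j) * (\sum_(j < m) Hl i j * y 0 j)
  = Q (Hk^T *m Hl) y.
Proof.
rewrite /Q (mulmxA y) -(mulmxA (y *m Hk^T)) mxE; apply: eq_bigr => i _; rewrite !mxE.
congr (_ * _); apply: eq_bigr => j _; rewrite !mxE //.
by rewrite mulrC.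
Qed.

Variable n : nat.
Lemma dir1 (Hs : 'I_n -> 'M[R]_m) (c : R) (L : 'rV[R]_m -> R) :
  (forall k, (Hs k)^T = Hs k) ->
  (forall y k l, Q (Hs k *m Hs l) y + c * (k == l)%:R = L y * (k == l)%:R) ->
  (forall a b, Hs a *m Hs a = Hs b *m Hs b) /\ (forall a b, a != b -> Hs a *m Hs b = - (Hs b *m Hs a)).
Proof.
move=> sH E; split.
  move=> a b; apply: subr0_eq; apply: polar.
    by rewrite linearB /= !trmx_mul !sH.
  move=> y; rewrite QD QN.
  have := E y a a; have := E y b b; rewrite !eqxx !mulr1 => e1 e2.
  lra.
move=> a b ab; apply: subr0_eq; rewrite opprK; apply: polar.
  by rewrite linearD /= !trmx_mul !sH addrC.
move=> y; rewrite QD.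
have := E y a b; have := E y b a.
rewrite (negbTE ab) eq_sym (negbTE ab) !mulr0 => e1 e2.
lra.
Qed.

Lemma dir2 (Hs : 'I_n -> 'M[R]_m) (k0 : 'I_n) :
  (forall k, (Hs k)^T = Hs k) ->
  (forall a b, Hs a *m Hs a = Hs b *m Hs b) ->
  (forall a b, a != b -> Hs a *m Hs b = - (Hs b *m Hs a)) ->
  forall k l y, Q (Hs k *m Hs l) y = Q (Hs k0 *m Hs k0) y * (k == l)%:R.
Proof.
move=> sH Hsq Hanti k l y.
case: (eqVneq k l) => [<-|kl]; first by rewrite (Hsq k k0) ?eqxx mulr1.
rewrite mulr0.
have q1 : Q (Hs k *m Hs l) y = - Q (Hs k *m Hs l) y.
  by rewrite {1}(Hanti k l kl) QN -QT trmx_mul !sH.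
lra.
Qed.
End Alg.
Arguments Q {R m}.

Lemma fin2 (R : realType) (q00 qkl c d : R) : qkl = q00 * d ->
  qkl + c * d = (q00 + c * 1) * d.
Proof. by move=> ->; rewrite mulr1 mulrDl. Qed.

Theorem theorem2p7 (R : realType) (m n : nat) (U : set 'rV[R]_m)
  (phi : 'I_n -> 'rV[R]_m -> R) :
  open U -> connected U ->
  (forall k, smooth_on U (phi k)) ->
  hwc U phi ->
  hwc (lift_domain U) (complete_lift phi) <->
  (forall x, U x ->
     (forall a b : 'I_n, hess (phi a) x *m hess (phi a) x
                         = hess (phi b) x *m hess (phi b) x) /\
     (forall a b : 'I_n, a != b ->
        hess (phi a) x *m hess (phi b) x
        = - (hess (phi b) x *m hess (phi a) x))).
Proof.
move=> oU _ sm [lam hlam].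
have symH : forall k x, U x -> (hess (phi k) x)^T = hess (phi k) x.
  move=> k x Ux; apply/matrixP => i j; rewrite !mxE.
  exact: (@hess_sym R m U (phi k) x oU (sm k) Ux j i).
have dP : forall k (z : 'rV[R]_(m + m)), U (lsubmx z) -> forall j (i : 'I_m),
    derivable (partial j (phi k)) (lsubmx z) (ei i).
  by move=> k z Uz j i; have D := sm k [:: j] _ Uz; exact: (@diff_derivable _ _ _ _ _ _ D).
have key : forall z : 'rV[R]_(m + m), U (lsubmx z) -> forall k l,
  \sum_(i < m + m) partial i (complete_lift phi k) z * partial i (complete_lift phi l) z
  = Q (hess (phi k) (lsubmx z) *m hess (phi l) (lsubmx z)) (rsubmx z)
    + lam (lsubmx z) ^+ 2 * (k == l)%:R.
  move=> z Uz k l; rewrite big_split_ord /= -hlam //; congr (_ + _).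
    rewrite -{1}(symH k _ Uz) -Q_expand; apply: eq_bigr => i _.
    rewrite (@lift_partial_l R m n phi k i z (fun j => dP k z Uz j i)).
    rewrite (@lift_partial_l R m n phi l i z (fun j => dP l z Uz j i)).
    by congr (_ * _); apply: eq_bigr => j _; rewrite /hess mxE.
  by apply: eq_bigr => i _; rewrite !lift_partial_r.
split.
  move=> [Lam hL] x Ux.
  apply: (@dir1 R m n (fun k => hess (phi k) x) (lam x ^+ 2)
            (fun y => Lam (row_mx x y) ^+ 2)).
    exact: (fun k => symH k x Ux).
  move=> y k l /=; have := hL (row_mx x y); rewrite /lift_domain /= row_mxKl.
  move=> /(_ Ux k l); rewrite key; last by rewrite row_mxKl.
  by rewrite row_mxKl row_mxKr.
move=> H.
case: (posnP n) => [n0|n0].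
  by exists (fun _ => 0) => z _ k; have := leq_trans (ltn_ord k) (eq_leq n0).
pose k0 := Ordinal n0.
exists (fun z => Num.sqrt (\sum_(i < m + m)
   partial i (complete_lift phi k0) z * partial i (complete_lift phi k0) z)).
move=> z Uz k l; rewrite /lift_domain /= in Uz.
rewrite sqr_sqrtr; last by apply: sumr_ge0 => i _; rewrite -expr2 sqr_ge0.
apply: (etrans (key z Uz k l)).
apply: (etrans _ (congr1 (fun t => t * (k == l)%:R) (esym (key z Uz k0 k0)))).
have [Hsq Hanti] := H _ Uz.
have D2 := @dir2 R m n (fun k => hess (phi k) (lsubmx z)) k0
   (fun k => symH k _ Uz) Hsq Hanti k l (rsubmx z).
rewrite eqxx; apply: fin2; exact D2.
Qed.
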